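(* Let $I$ be a closed interval of positive length, and let $\alpha:I\to S^{k-1}\subseteq\mathbb{R}^k$, $\alpha(s)=(\alpha_1(s),\dots,\alpha_k(s))$, be a continuous, nonconstant path. Define $D_\alpha:I\to\mathbb{Z}$ by $D_\alpha(s)=\dim_{\mathbb{Q}}\{\beta\in\mathbb{Q}^k:\beta\cdot\alpha(s)=0\}$. Then $D_\alpha$ is not constant. *)

(* Defs.v *)
From HB Require Import structures.
From mathcomp Require Import all_boot all_order all_algebra.
From mathcomp Require Import all_classical all_reals all_analysis.
Set Implicit Arguments. Unset Strict Implicit. Unset Printing Implicit Defensive.
Import Order.TTheory GRing.Theory Num.Theory.
Import numFieldNormedType.Exports.
Local Open Scope ring_scope.

Definition rdot (R : realType) (k : nat) (beta : 'rV[rat]_k) (a : 'rV[R]_k) : R :=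
  \sum_(i < k) ratr (beta 0 i) * a 0 i.

Definition Qdim_ortho (R : realType) (k : nat) (a : 'rV[R]_k) (d : nat) : Prop :=
  (exists B : 'M[rat]_(d, k), row_free B /\ forall i, rdot (row i B) a = 0) /\
  (forall (d' : nat) (B : 'M[rat]_(d', k)),
      row_free B -> (forall i, rdot (row i B) a = 0) -> (d' <= d)%N).

Definition on_sphere (R : realType) (k : nat) (a : 'rV[R]_k) : Prop :=
  \sum_(i < k) a 0 i ^+ 2 = 1.

(* Main.v *)
Require Import Defs.
From HB Require Import structures.
From mathcomp Require Import all_boot all_order all_algebra.
From mathcomp Require Import all_classical all_reals all_analysis.
From mathcomp Require Import ring lra.
Import Order.TTheory GRing.Theory Num.Theory.
Import numFieldNormedType.Exports.
Local Open Scope classical_set_scope.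
Local Open Scope ring_scope.
Section LinAlg.
Set Implicit Arguments. Unset Strict Implicit.
Variables (R : realType) (k : nat).

Definition ortho m (B : 'M[rat]_(m,k)) (v : 'rV[R]_k) :=
  map_mx (ratr : rat -> R) B *m v^T = 0.
Arguments ortho {m}.

Lemma rdot_rowE m (B : 'M[rat]_(m,k)) (v : 'rV[R]_k) i :
  rdot (row i B) v = (map_mx ratr B *m v^T) i 0.
Proof. by rewrite /rdot !mxE; apply: eq_bigr => j _; rewrite !mxE. Qed.

Lemma orthoP m (B : 'M[rat]_(m,k)) (v : 'rV[R]_k) :
  ortho B v <-> forall i, rdot (row i B) v = 0.
Proof.
split => [H i | H]; first by rewrite rdot_rowE H mxE.
by apply/matrixP => i j; rewrite (ord1 j) -rdot_rowE H mxE.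
Qed.

Lemma ortho_sub m1 m2 (A : 'M[rat]_(m1,k)) (B : 'M[rat]_(m2,k)) v :
  (A <= B)%MS -> ortho B v -> ortho A v.
Proof.
by move=> /submxP [D ->]; rewrite /ortho map_mxM -mulmxA => ->; rewrite mulmx0.
Qed.

Lemma ortho_col m1 m2 (A : 'M[rat]_(m1,k)) (B : 'M[rat]_(m2,k)) v :
  ortho A v -> ortho B v -> ortho (col_mx A B) v.
Proof. by rewrite /ortho map_col_mx mul_col_mx => -> ->; exact: col_mx0. Qed.

Lemma qdim_rank (v : 'rV[R]_k) d m (M : 'M[rat]_(m,k)) :
  Qdim_ortho v d -> ortho M v -> (\rank M <= d)%N.
Proof.
move=> [_ Hmax] HM; apply: (Hmax _ (row_base M) (row_base_free M)).
apply/orthoP; apply: ortho_sub HM.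
by rewrite eq_row_base submx_refl.
Qed.

Lemma qdim_sub (v : 'rV[R]_k) d (B1 B2 : 'M[rat]_(d,k)) :
  Qdim_ortho v d -> row_free B2 -> ortho B1 v -> ortho B2 v -> (B1 <= B2)%MS.
Proof.
move=> Hq f2 o1 o2.
have Hr := qdim_rank Hq (ortho_col o2 o1).
have s2 : (B2 <= col_mx B2 B1)%MS by rewrite -addsmxE addsmxSl.
have s1 : (B1 <= col_mx B2 B1)%MS by rewrite -addsmxE addsmxSr.
have L := mxrank_leqif_sup s2.
move: f2; rewrite /row_free => /eqP Ed; rewrite Ed in L.
have : (col_mx B2 B1 <= B2)%MS by rewrite -(L.2) eqn_leq Hr L.1.
exact: submx_trans.
Qed.

Lemma qdim_exists (v : 'rV[R]_k) : exists d, Qdim_ortho v d.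
Proof.
pose P := fun d => `[< exists B : 'M[rat]_(d,k), row_free B /\ ortho B v >].
have ex : exists d, P d.
  exists 0%N; apply/asboolP; exists 0; split.
    by rewrite /row_free mxrank0.
  by rewrite /ortho; apply: flatmx0.
have ub : forall d, P d -> (d <= k)%N.
  by move=> d /asboolP [B [/eqP Hd _]]; rewrite -Hd; exact: rank_leq_col.
case: (ex_maxnP ex ub) => d /asboolP [B [fB oB]] Hmax.
exists d; split; first by exists B; split => //; apply/orthoP.
move=> d' B' fB' oB'; apply: Hmax; apply/asboolP; exists B'; split => //.
exact/orthoP.
Qed.

End LinAlg.
Section Sierp.
Set Implicit Arguments. Unset Strict Implicit.
Variables (R : realType) (a b : R) (E : nat -> R -> Prop).
Hypothesis Hcl : forall n z, a <= z <= b ->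
  (forall e, 0 < e -> exists w, [/\ a <= w <= b, `|w - z| < e & E n w]) -> E n z.
Hypothesis Hdis : forall n m x, a <= x <= b -> E n x -> E m x -> n = m.
Hypothesis Hcov : forall x, a <= x <= b -> exists n, E n x.

Lemma sup_piece p x y : a <= x -> x <= y -> y <= b -> E p x ->
  exists s, [/\ x <= s, s <= y, E p s & forall w, s < w <= y -> ~ E p w].
Proof.
move=> ax xy yb Epx.
pose S := [set w | x <= w <= y /\ E p w].
have Sx : S x by split => //; rewrite lexx xy.
have ubS : ubound S y by move=> w [/andP[_ ->]].
have hS : has_sup S by split; [exists x | exists y].
have ub := sup_upper_bound hS.
exists (sup S); split.
- exact: ub Sx.
- by apply: ge_sup => //; exists x.
- apply: Hcl.
    apply/andP; split; first by apply: le_trans ax (ub _ Sx).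
    by apply: le_trans yb; apply: ge_sup => //; exists x.
  move=> e e0; have [w [/andP [xw wy] Epw] ltw] := sup_adherent e0 hS.
  exists w; split => //.
  + by apply/andP; split; [apply: le_trans xw | apply: le_trans wy yb].
  + have ws : w <= sup S by apply: (ub); split => //; rewrite xw wy.
    rewrite distrC ger0_norm ?subr_ge0 //; lra.
- move=> w /andP [sw wy] Epw.
  have : w <= sup S by apply: (ub); split => //; rewrite wy andbT; apply: le_trans (ltW sw); apply: (ub).
  by rewrite leNgt sw.
Qed.

Lemma inf_piece q x y : a <= x -> x <= y -> y <= b -> E q y ->
  exists s, [/\ x <= s, s <= y, E q s & forall w, x <= w < s -> ~ E q w].
Proof.
move=> ax xy yb Eqy.
pose S := [set w | x <= w <= y /\ E q w].
have Sy : S y by split => //; rewrite lexx xy.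
have lbS : lbound S x by move=> w [/andP[-> _]].
have hS : has_inf S by split; [exists y | exists x].
have lb := ge_inf hS.2.
have xs : x <= inf S by apply: lb_le_inf => //; exists y.
exists (inf S); split => //.
- exact: (lb).
- apply: Hcl.
    apply/andP; split; first by apply: le_trans ax xs.
    by apply: le_trans yb; apply: le_trans (lb _ Sy) _.
  move=> e e0; have [w [/andP [xw wy] Eqw] ltw] := inf_adherent e0 hS.
  exists w; split => //.
  + by apply/andP; split; [apply: le_trans xw | apply: le_trans wy yb].
  + have ws : inf S <= w by apply: (lb); split => //; rewrite xw wy.
    rewrite ger0_norm ?subr_ge0 //; lra.
- move=> w /andP [xw ws] Eqw.
  have : inf S <= w.
    apply: (lb); split => //; rewrite xw /=; apply: le_trans (ltW ws) _; exact: (lb).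
  by rewrite leNgt ws.
Qed.

Definition inv x y := [/\ a <= x, x < y, y <= b & exists p, E p x /\ ~ E p y].

Lemma step x y : inv x y -> forall n, exists x' y',
  [/\ inv x' y', x <= x', y' <= y & forall w, x' <= w <= y' -> ~ E n w].
Proof.
case=> ax xy yb [p [Epx Npy]] n.
have Ix : a <= x <= b by rewrite ax /= (le_trans (ltW xy) yb).
have Iy : a <= y <= b by rewrite yb andbT (le_trans ax (ltW xy)).
case: (eqVneq n p) => [-> | nep].
- have [s [xs sy Eps Hs]] := sup_piece ax (ltW xy) yb Epx.
  have sy' : s < y by rewrite lt_neqAle sy andbT; apply/eqP => esy; apply: Npy; rewrite -esy.
  have [q Eqy] := Hcov Iy.
  have [i [si iy Eqi Hi]] := inf_piece (le_trans ax xs) (ltW sy') yb Eqy.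
  have Ii : a <= i <= b by rewrite (le_trans iy yb) andbT (le_trans ax (le_trans xs si)).
  have si' : s < i.
    rewrite lt_neqAle si andbT; apply/eqP => esi.
    have Is : a <= s <= b by rewrite esi.
    have qp := Hdis Is Eps (eq_ind_r (E q) Eqi esi).
    by apply: Npy; rewrite qp.
  pose m := (s + i) / 2.
  have Im : a <= m <= b.
    move: Ii => /andP [ai ib]; have ? := le_trans ax xs.
    apply/andP; split; rewrite /m; lra.
  have [r Erm] := Hcov Im.
  exists m, i; split.
  + split => //.
    * by move: Im => /andP [].
    * rewrite /m; lra.
    * by move: Ii => /andP [].
    * exists r; split => // Eri.
      have rq := Hdis Ii Eri Eqi; rewrite rq in Erm.
      by apply: (Hi m) => //; apply/andP; split; rewrite /m; lra.
  + apply: le_trans xs _; rewrite /m; lra.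
  + exact: iy.
  + move=> w /andP [mw wi]; apply: Hs; apply/andP; split.
      by apply: lt_le_trans mw; rewrite /m; lra.
    exact: le_trans wi iy.
- have [y' [xy' y'y Npy' Hav]] : exists y', [/\ x < y', y' <= y, ~ E p y' &
      forall w, x <= w < y' -> ~ E n w].
    case: (pselect (exists c, x <= c <= y /\ E n c)) => [[c [/andP [xc cy] Enc]] | Hno].
      have [i [xi ic Eni Hi]] := inf_piece ax xc (le_trans cy yb) Enc.
      have Ii : a <= i <= b by rewrite (le_trans ic (le_trans cy yb)) andbT (le_trans ax xi).
      exists i; split => //.
      * rewrite lt_neqAle xi andbT; apply/eqP => exi.
        have := Hdis Ix Epx (eq_ind_r (E n) Eni exi).
        by move=> pn; move: nep; rewrite pn eqxx.
      * exact: le_trans ic cy.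
      * move=> Epi; have := Hdis Ii Eni Epi => np; by move: nep; rewrite np eqxx.
    exists y; split => // w /andP [xw wy] Enw; apply: Hno; exists w; split => //.
    by rewrite xw (ltW wy).
  have [s [xs sy Eps Hs]] := sup_piece ax (ltW xy') (le_trans y'y yb) Epx.
  have sy' : s < y' by rewrite lt_neqAle sy andbT; apply/eqP => esy; apply: Npy'; rewrite -esy.
  pose m := (s + y') / 2.
  exists s, m; split.
  + split.
    * exact: le_trans ax xs.
    * rewrite /m; lra.
    * apply: le_trans yb; apply: le_trans y'y; rewrite /m; lra.
    * exists p; split => //; apply: Hs; apply/andP; split; rewrite /m; lra.
  + exact: xs.
  + apply: le_trans y'y; rewrite /m; lra.
  + move=> w /andP [sw wm]; apply: Hav; apply/andP; split.
      exact: le_trans sw.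
    by apply: le_lt_trans wm _; rewrite /m; lra.
Qed.

Lemma sierpinski : exists n, forall x, a <= x <= b -> E n x.
Proof.
case: (lerP a b) => [ab | ba]; last first.
  by exists 0%N => x /andP [ax xb]; have := le_trans ax xb; rewrite leNgt ba.
have Ia : a <= a <= b by rewrite lexx ab.
have [p Epa] := Hcov Ia.
case: (pselect (exists n, forall x, a <= x <= b -> E n x)) => // Hnot.
have [y0 [Iy0 Npy0]] : exists y, a <= y <= b /\ ~ E p y.
  apply: contrapT => H; apply: Hnot; exists p => x Ix.
  by apply: contrapT => Npx; apply: H; exists x.
have inv0 : inv a y0.
  move: Iy0 => /andP [ay yb]; split => //; last by exists p.
  by rewrite lt_neqAle ay andbT; apply/eqP => ey; apply: Npy0; rewrite -ey.
have st : forall nxy : nat * (R * R), exists xy' : R * R,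
    inv nxy.2.1 nxy.2.2 -> [/\ inv xy'.1 xy'.2, nxy.2.1 <= xy'.1, xy'.2 <= nxy.2.2 &
       forall w, xy'.1 <= w <= xy'.2 -> ~ E nxy.1 w].
  move=> [n [x y]] /=.
  case: (pselect (inv x y)) => H; last by exists (x, y).
  by have [x' [y' H']] := step H n; exists (x', y').
have [f Hf] := choice st.
pose u := fix u n := if n is n'.+1 then f (n', u n') else (a, y0).
have Hinv : forall n, inv (u n).1 (u n).2.
  by elim => [|n IH] //=; have [] := Hf (n, u n) IH.
have Hs : forall n, [/\ (u n).1 <= (u n.+1).1, (u n.+1).2 <= (u n).2 &
    forall w, (u n.+1).1 <= w <= (u n.+1).2 -> ~ E n w].
  by move=> n; have [] := Hf (n, u n) (Hinv n).
have Hmono : forall n m, (n <= m)%N -> (u n).1 <= (u m).1 /\ (u m).2 <= (u n).2.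
  move=> n; elim => [|m IH]; first by rewrite leqn0 => /eqP ->; rewrite !lexx.
  rewrite leq_eqVlt => /orP [/eqP -> | ]; first by rewrite !lexx.
  rewrite ltnS => /IH [h1 h2]; have [h3 h4 _] := Hs m.
  by split; [apply: le_trans h3 | apply: le_trans h2].
have Hlt : forall n m, (u n).1 < (u m).2.
  move=> n m; have [h1 _] := Hmono n (maxn n m) (leq_maxl _ _).
  have [_ h2] := Hmono m (maxn n m) (leq_maxr _ _).
  have [_ h3 _ _] := Hinv (maxn n m).
  by apply: le_lt_trans h1 _; apply: lt_le_trans h3 h2.
pose X := [set x | exists n, x = (u n).1].
have hX : has_sup X.
  split; first by exists (u 0%N).1; exists 0%N.
  by exists (u 0%N).2 => x [n ->]; apply: ltW.
have zge : forall n, (u n).1 <= sup X by move=> n; apply: sup_upper_bound => //; exists n.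
have zle : forall m, sup X <= (u m).2.
  move=> m; apply: ge_sup; first by exists (u 0%N).1; exists 0%N.
  by move=> x [n ->]; apply: ltW.
have Iz : a <= sup X <= b.
  have [a0 _ b0 _] := Hinv 0%N.
  by rewrite (le_trans a0 (zge 0%N)) (le_trans (zle 0%N) b0).
have [N EN] := Hcov Iz.
have [_ _ Hav] := Hs N.
exfalso; apply: (Hav (sup X) _ EN); apply/andP; split; [exact: (zge N.+1) | exact: (zle N.+1)].
Qed.

End Sierp.
Section Anal.
Set Implicit Arguments. Unset Strict Implicit.
Variables (R : realType) (k : nat).

Lemma rdot_cont (beta : 'rV[rat]_k) : continuous (fun v : 'rV[R]_k => rdot beta v).
Proof.
move=> x.
have -> : (fun v : 'rV[R]_k => rdot beta v) =
   \sum_(i < k) (fun v : 'rV[R]_k => ratr (beta 0 i) * v 0 i).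
  by apply/funext => v; rewrite fct_sumE /rdot.
apply: (@big_ind _ (fun f : 'rV[R]_k -> R => {for x, continuous f})).
- exact: cst_continuous.
- by move=> f g; apply: continuousD.
- move=> i _; apply: (@continuousM _ _ (fun=> ratr (beta 0 i)) (fun v : 'rV[R]_k => v 0 i)).
    exact: cst_continuous.
  exact: coord_continuous.
Qed.

Lemma h_cont (beta : 'rV[rat]_k) (A : set R) (f : R -> 'rV[R]_k) :
  {within A, continuous f} -> {within A, continuous (fun x => rdot beta (f x))}.
Proof.
move=> fc x.
apply: (@continuous_comp _ _ _ (f : subspace A -> _) (fun v => rdot beta v) x (fc x)).
exact: rdot_cont.
Qed.

Lemma zero_closed (a b : R) (h : R -> R) z : {within `[a, b], continuous h} ->
  a <= z <= b ->
  (forall e, 0 < e -> exists w, [/\ a <= w <= b, `|w - z| < e & h w = 0]) -> h z = 0.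
Proof.
move=> hc Iz H.
have Iz' : z \in `[a, b] by rewrite in_itv /=.
have := (subspace_continuousP _ _).1 hc z Iz'.
move/cvgrPdist_lt => cv.
apply: contrapT => hz0.
have e0 : 0 < `|h z| by rewrite normr_gt0; apply/eqP.
have := cv _ e0; rewrite near_withinE => /nbhs_ballP [d /= d0 Hd].
have [w [Iw wz hw]] := H d d0.
have := Hd w; rewrite /ball /= distrC => /(_ wz).
rewrite /= in_itv /= => /(_ Iw).
by rewrite /from_subspace /= hw subr0 ltxx.
Qed.

Lemma ivt0 (a b : R) (h : R -> R) s t : {within `[a, b], continuous h} ->
  a <= s <= b -> a <= t <= b -> h s < 0 -> 0 < h t ->
  exists u, a <= u <= b /\ h u = 0.
Proof.
move=> hc /andP [as_ sb] /andP [at_ tb] hs0 ht0.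
have sub : forall x y, a <= x -> y <= b -> `[x, y] `<=` `[a, b].
  move=> x y ax yb w; rewrite /= !in_itv /= => /andP [xw wy].
  by rewrite (le_trans ax xw) (le_trans wy yb).
case: (lerP s t) => st.
- have cond : Num.min (h s) (h t) <= 0 <= Num.max (h s) (h t).
    by rewrite ge_min le_max (ltW hs0) /=; apply/orP; right; exact: ltW.
  have [c cI hc0] := IVT st (continuous_subspaceW (sub _ _ as_ tb) hc) cond.
  move: cI; rewrite in_itv /= => /andP [sc ct].
  by exists c; split => //; rewrite (le_trans as_ sc) (le_trans ct tb).
- have cond : Num.min (h t) (h s) <= 0 <= Num.max (h t) (h s).
    rewrite ge_min le_max (ltW hs0) orbT /=; apply/orP; left; exact: ltW.
  have [c cI hc0] := IVT (ltW st) (continuous_subspaceW (sub _ _ at_ sb) hc) cond.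
  move: cI; rewrite in_itv /= => /andP [sc ct].
  by exists c; split => //; rewrite (le_trans at_ sc) (le_trans ct sb).
Qed.

Lemma approx (gam v : 'rV[R]_k) c : 0 < c -> exists2 eps, 0 < eps &
  forall beta : 'rV[rat]_k, (forall j, `|ratr (beta 0 j) - gam 0 j| < eps) ->
   `|rdot beta v - \sum_j gam 0 j * v 0 j| < c.
Proof.
move=> c0.
set M := \sum_j `|v 0 j|.
have M0 : 0 <= M by apply: sumr_ge0 => j _.
have M1 : 0 < 1 + M by apply: ltr_wpDr.
exists (c / (1 + M)); first exact: divr_gt0.
move=> beta Hb.
rewrite /rdot -sumrB.
apply: le_lt_trans (ler_norm_sum _ _ _) _.
apply: (@le_lt_trans _ _ (\sum_j c / (1 + M) * `|v 0 j|)).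
  apply: ler_sum => j _; rewrite -mulrBl normrM.
  by apply: ler_wpM2r => //; apply: ltW.
rewrite -mulr_sumr -/M mulrAC ltr_pdivrMr //.
nra.
Qed.

Lemma rat_approx_vec (gam : 'rV[R]_k) eps : 0 < eps ->
  exists beta : 'rV[rat]_k, forall j, `|ratr (beta 0 j) - gam 0 j| < eps.
Proof.
move=> e0.
have H1 : forall j : 'I_k, exists q : rat, `|ratr q - gam 0 j| < eps.
  move=> j.
  have [y [By [q _ qy]]] := @dense_rat R (ball (gam 0 j) eps)
     (ex_intro _ (gam 0 j) (ballxx _ e0)) (ball_open _ _).
  by exists q; rewrite qy distrC; move: By; rewrite /ball /=.
have [f Hf] := choice H1.
by exists (\row_j f j) => j; rewrite mxE.
Qed.

Lemma sep (v w : 'rV[R]_k) : on_sphere v -> on_sphere w -> v <> w ->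
  exists beta : 'rV[rat]_k, rdot beta v < 0 /\ 0 < rdot beta w.
Proof.
rewrite /on_sphere => sv sw nvw.
pose gam := w - v.
set D := \sum_j (w 0 j - v 0 j) ^+ 2.
set S1 := \sum_j gam 0 j * v 0 j.
set S2 := \sum_j gam 0 j * w 0 j.
have E1 : D + 2 * S1 = 0.
  have : \sum_j ((w 0 j - v 0 j) ^+ 2 + 2 * (gam 0 j * v 0 j)) =
         \sum_j w 0 j ^+ 2 - \sum_j v 0 j ^+ 2.
    by rewrite -sumrB; apply: eq_bigr => j _; rewrite /gam !mxE; ring.
  by rewrite big_split /= -mulr_sumr sv sw subrr.
have E2 : D - 2 * S2 = 0.
  have : \sum_j ((w 0 j - v 0 j) ^+ 2 - 2 * (gam 0 j * w 0 j)) =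
         \sum_j v 0 j ^+ 2 - \sum_j w 0 j ^+ 2.
    by rewrite -sumrB; apply: eq_bigr => j _; rewrite /gam !mxE; ring.
  by rewrite sumrB -mulr_sumr sv sw subrr.
have D0 : 0 < D.
  have Dge : 0 <= D by apply: sumr_ge0 => j _; apply: sqr_ge0.
  rewrite lt_neqAle Dge andbT; apply/eqP => D0; apply: nvw.
  apply/matrixP => i j; rewrite (ord1 i).
  have := psumr_eq0P (fun j _ => sqr_ge0 (w 0 j - v 0 j)) (esym D0) (i := j) isT.
  by move/eqP; rewrite sqrf_eq0 subr_eq0 => /eqP.
have c1 : 0 < - S1 by lra.
have c2 : 0 < S2 by lra.
have [e1 e10 H1] := approx gam v c1.
have [e2 e20 H2] := approx gam w c2.
have e0 : 0 < Num.min e1 e2 by rewrite lt_min e10 e20.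
have [beta Hb] := rat_approx_vec gam e0.
have Hb1 : forall j, `|ratr (beta 0 j) - gam 0 j| < e1.
  by move=> j; have := Hb j; rewrite lt_min => /andP [].
have Hb2 : forall j, `|ratr (beta 0 j) - gam 0 j| < e2.
  by move=> j; have := Hb j; rewrite lt_min => /andP [].
have h1 := H1 _ Hb1; have h2 := H2 _ Hb2.
exists beta; split.
- have := ler_norm (rdot beta v - S1); rewrite -/S1 in h1; lra.
- have := ler_norm (S2 - rdot beta w); rewrite distrC -/S2 in h2 *; lra.
Qed.

End Anal.
Theorem mainTheorem7 (R : realType) (k : nat) (a b : R) (alpha : R -> 'rV[R]_k) :
  a < b ->
  {within `[a, b], continuous alpha} ->
  (forall s, a <= s <= b -> on_sphere (alpha s)) ->
  (exists s t, [/\ a <= s <= b, a <= t <= b & alpha s <> alpha t]) ->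
  exists s t d1 d2, [/\ a <= s <= b, a <= t <= b,
    Qdim_ortho (alpha s) d1, Qdim_ortho (alpha t) d2 & d1 <> d2].
Proof.
move=> ab hc hs [s [t [Is It nst]]].
apply: contrapT => Hn.
have Hall : forall s' t' d1 d2, a <= s' <= b -> a <= t' <= b ->
    Qdim_ortho (alpha s') d1 -> Qdim_ortho (alpha t') d2 -> d1 = d2.
  move=> s' t' d1 d2 Is' It' Q1 Q2; apply: contrapT => ne; apply: Hn.
  by exists s', t', d1, d2; split.
have Ia : a <= a <= b by rewrite lexx ltW.
have [d Hd] := qdim_exists (alpha a).
have Qd : forall x, a <= x <= b -> Qdim_ortho (alpha x) d.
  move=> x Ix; have [d' Hd'] := qdim_exists (alpha x).
  by rewrite -(Hall x a d' d Ix Ia Hd' Hd).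
pose F n x := exists B : 'M[rat]_(d, k),
  [/\ unpickle n = Some B, row_free B & ortho B (alpha x)].
pose E n x := F n x /\ ~ (exists m, (m < n)%N /\
   exists y, a <= y <= b /\ F m y /\ F n y).
have HF : forall n m x y, a <= y <= b -> F m y -> F n y -> a <= x <= b ->
    F n x -> F m x.
  move=> n m x y Iy [B [uB fB oB]] [C [uC fC oC]] Ix [C' [uC' fC' oC']].
  rewrite uC in uC'; case: uC' => eC; subst C'.
  exists B; split => //; apply: ortho_sub oC'.
  exact: qdim_sub (Qd y Iy) fC oB oC.
have Hcl : forall n z, a <= z <= b ->
    (forall e, 0 < e -> exists w, [/\ a <= w <= b, `|w - z| < e & E n w]) -> E n z.
  move=> n z Iz H.
  have [w [_ _ [[B [uB fB oB]] Nw]]] := H 1 ltr01.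
  split => //; exists B; split => //.
  apply/orthoP => i.
  apply: (zero_closed (h := fun x => rdot (row i B) (alpha x)) (h_cont (beta := row i B) hc) Iz) => e e0.
  have [w' [Iw' dw' [[B' [uB' _ oB']] _]]] := H e e0.
  exists w'; split => //.
  rewrite uB in uB'; case: uB' => eB; subst B'.
  exact: (proj1 (orthoP _ _) oB' i).
have Hdis : forall n m x, a <= x <= b -> E n x -> E m x -> n = m.
  move=> n m x Ix [Fn Nn] [Fm Nm].
  case: (ltngtP n m) => // [nm | mn].
    by exfalso; apply: Nm; exists n; split => //; exists x.
  by exfalso; apply: Nn; exists m; split => //; exists x.
have Hcov : forall x, a <= x <= b -> exists n, E n x.
  move=> x Ix; have [[B [fB oB]] _] := Qd x Ix.
  have exF : exists n, `[< F n x >].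
    exists (pickle B); apply/asboolP; exists B; rewrite pickleK; split => //.
    exact/orthoP.
  case: (ex_minnP exF) => n /asboolP Fn Hmin.
  exists n; split => // [[m [mn [y [Iy [Fm Fny]]]]]].
  have Fmx := HF n m x y Iy Fm Fny Ix Fn.
  have := Hmin m (asboolT Fmx).
  by rewrite leqNgt mn.
have [n Hn'] := sierpinski Hcl Hdis Hcov.
have [[B [uB fB _]] _] := Hn' a Ia.
have oB : forall x, a <= x <= b -> ortho B (alpha x).
  move=> x Ix; have [[B' [uB' _ oB']] _] := Hn' x Ix.
  by rewrite uB in uB'; case: uB' => ->.
have [beta [bs bt]] := sep (hs s Is) (hs t It) nst.
have [u [Iu hu]] := ivt0 (h := fun x => rdot beta (alpha x)) (h_cont (beta := beta) hc) Is It bs bt.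
pose C := col_mx B beta.
have oC : ortho C (alpha u).
  apply: ortho_col; first exact: oB.
  by apply/orthoP => i; rewrite row_id.
have rC := qdim_rank (Qd u Iu) oC.
have sBC : (B <= C)%MS by rewrite -addsmxE addsmxSl.
have sbC : (beta <= C)%MS by rewrite -addsmxE addsmxSr.
have L := mxrank_leqif_sup sBC.
move: fB; rewrite /row_free => /eqP rB; rewrite rB in L.
have nCB : ~~ (C <= B)%MS.
  apply/negP => CB.
  have ob : ortho beta (alpha s) by apply: ortho_sub (submx_trans sbC CB) (oB s Is).
  move: ob => /orthoP /(_ 0); rewrite row_id => b0.
  by move: bs; rewrite b0 ltxx.
have := ltn_leqif L; rewrite nCB => dlt.
by move: rC; rewrite leqNgt dlt.
Qed.
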